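(* Let $(R,\mathfrak m)$ be a regular local ring with $\dim R\ge 2$, let $\{(R_i,\mathfrak m_i)\}_{i\ge 0}$ be an infinite sequence of local quadratic transforms with $R_0=R$, and let $S=\bigcup_{i\ge0}R_i$ with maximal ideal $N=\bigcup_i\mathfrak m_i$. For $x\in S$ the following are equivalent: (1) $N=xS$; (2) $P:=\bigcap_{i>0}N^i$ is a prime ideal, $S/P$ is a DVR whose maximal ideal is the image of $xS$, and $P=PS_P$; (3) for every valuation ring $V$ that birationally dominates $S$, $\mathfrak m_iV=xV$ for all $i\gg0$; (4) $x$ is a regular parameter of $R_i$ (i.e. $x\in\mathfrak m_i\setminus\mathfrak m_i^2$) for all $i\gg0$.
   Context: A local quadratic transform of a regular local ring $(A,\mathfrak n)$ is a local ring $A[\mathfrak n/y]_{\mathfrak q}$ with $y\in\mathfrak n\setminus\mathfrak n^2$ and $\mathfrak q$ a prime ideal of $A[\mathfrak n/y]$ containing $\mathfrak n$. The sequence satisfies: for each $i\ge 0$, $R_{i+1}$ is a local quadratic transform of $R_i$, $R_i\subsetneq R_{i+1}$, and each $R_i$ is a regular local ring of dimension at least $2$ with maximal ideal $\mathfrak m_i$. A valuation ring $V$ birationally dominates $S$ if $V$ lies in the quotient field of $S$, contains $S$, and its maximal ideal contracts to $N$. *)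

(* Defs.v *)
(* Commutative algebra inside a fixed field K:
   all rings considered are subrings of K, represented as predicates K -> Prop. *)
From mathcomp Require Import all_boot all_algebra.
Set Implicit Arguments. Unset Strict Implicit. Unset Printing Implicit Defensive.
Import GRing.Theory.
Local Open Scope ring_scope.

Section CommAlg.
Variable K : fieldType.
Implicit Types (A B C I J V G : K -> Prop).

Definition sub_set A B := forall z, A z -> B z.

Definition subring A :=
  [/\ A 1, (forall a b, A a -> A b -> A (a - b)) & (forall a b, A a -> A b -> A (a * b))].

Definition ideal A I :=
  [/\ sub_set I A, I 0, (forall a b, I a -> I b -> I (a + b))
    & (forall a b, A a -> I b -> I (a * b))].

Definition unit_in A a := A a /\ exists b, A b /\ a * b = 1.

(* the set of non-units of A (the maximal ideal when A is local) *)
Definition maxideal A z := A z /\ ~ unit_in A z.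

Definition local_ring A := subring A /\ ideal A (maxideal A).

Definition prime_ideal A P :=
  [/\ ideal A P, ~ P 1 & forall a b, A a -> A b -> P (a * b) -> P a \/ P b].

Definition ideal_span A G z :=
  exists s : seq (K * K), (forall t, t \in s -> A t.1 /\ G t.2) /\
    z = \sum_(t <- s) t.1 * t.2.

Definition fin_gen A I :=
  exists g : seq K, (forall a, a \in g -> A a) /\ I = ideal_span A (fun z => z \in g).

Definition noetherian A := forall I, ideal A I -> fin_gen A I.

Definition ideal_pow A I (k : nat) :=
  ideal_span A (fun z => exists s : seq K,
            [/\ size s = k, (forall a, a \in s -> I a) & z = \prod_(a <- s) a]).

Definition prime_chain A (n : nat) :=
  exists P : nat -> K -> Prop,
    (forall j, (j <= n)%N -> prime_ideal A (P j)) /\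
    (forall j, (j < n)%N -> sub_set (P j) (P j.+1) /\ P j <> P j.+1).

Definition krull_dim A (d : nat) :=
  prime_chain A d /\ forall n, prime_chain A n -> (n <= d)%N.

Definition regular_local A (d : nat) :=
  [/\ local_ring A, noetherian A, krull_dim A d &
      exists g : seq K, [/\ size g = d, (forall a, a \in g -> A a)
                         & maxideal A = ideal_span A (fun z => z \in g)]].

Definition adjoin A G z :=
  forall C, subring C -> sub_set A C -> sub_set G C -> C z.

Definition blowup A (y : K) := adjoin A (fun z => exists a, maxideal A a /\ z = a / y).

Definition localize C q z := exists a b, [/\ C a, C b, ~ q b & z = a / b].

Definition local_quadratic_transform A B :=
  exists y, [/\ maxideal A y, ~ ideal_pow A (maxideal A) 2 y &
    exists q, [/\ prime_ideal (blowup A y) q, sub_set (maxideal A) q &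
                  B = localize (blowup A y) q]].

Definition quadratic_sequence (R : nat -> K -> Prop) :=
  forall i : nat,
    [/\ exists d, (2 <= d)%N /\ regular_local (R i) d,
        local_quadratic_transform (R i) (R i.+1) &
        sub_set (R i) (R i.+1) /\ R i <> R i.+1].

Definition has_fraction_field A :=
  forall z, exists a b, [/\ A a, A b, b <> 0 & z = a / b].

Definition union_ring (R : nat -> K -> Prop) z := exists i, R i z.
Definition union_max (R : nat -> K -> Prop) z := exists i, maxideal (R i) z.

Definition principal A (x : K) z := exists s, A s /\ z = x * s.

(* Ideals of A/I are
   represented (correspondence theorem) by ideals of A containing I; units of
   A/I by elements a with a*b - 1 in I for some b in A.  Conditions: A/I is a
   domain (I prime), x is nonzero in A/I, the non-units of A/I are exactly the
   image of xA (so A/I is local with maximal ideal (x)), and A/I is a PID. *)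
Definition quotient_DVR A I (x : K) :=
  [/\ prime_ideal A I, A x, ~ I x,
      (forall a, A a -> ((~ exists b, A b /\ I (a * b - 1)) <->
                          exists s, A s /\ I (a - x * s)))
    & forall J, ideal A J -> sub_set I J ->
        exists g, A g /\ J = (fun z => A z /\ exists a, A a /\ I (z - a * g))].

Definition valuation_ring V :=
  subring V /\ forall z, z <> 0 -> V z \/ V z^-1.

Definition bir_dominates V S N :=
  [/\ valuation_ring V, sub_set S V & forall z, S z -> (maxideal V z <-> N z)].

End CommAlg.

(* Main.v *)
Require Import Defs.
From mathcomp Require Import all_boot all_algebra.
From mathcomp Require Import ring zify.
From mathcomp Require boolp classical_sets.
From Stdlib Require Import Classical FunctionalExtensionality PropExtensionality.
Set Implicit Arguments. Unset Strict Implicit. Unset Printing Implicit Defensive.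
Import GRing.Theory.
Local Open Scope ring_scope.

Section Basic.
Variable K : fieldType.
Implicit Types (A I : K -> Prop).

Lemma sr1 A : subring A -> A 1. Proof. by case. Qed.
Lemma srB A a b : subring A -> A a -> A b -> A (a - b). Proof. by case=> _ h _; apply: h. Qed.
Lemma srM A a b : subring A -> A a -> A b -> A (a * b). Proof. by case=> _ _ h; apply: h. Qed.
Lemma sr0 A : subring A -> A 0.
Proof. by move=> h; rewrite -(subrr 1); apply: srB => //; apply: sr1. Qed.
Lemma srN A a : subring A -> A a -> A (- a).
Proof. by move=> h ha; rewrite -sub0r; apply: srB => //; apply: sr0. Qed.
Lemma srD A a b : subring A -> A a -> A b -> A (a + b).
Proof. by move=> h ha hb; rewrite -(opprK b); apply: srB => //; apply: srN. Qed.
Lemma srX A a n : subring A -> A a -> A (a ^+ n).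
Proof.
move=> h ha; elim: n => [|n ih]; first by rewrite expr0; apply: sr1.
by rewrite exprS; apply: srM.
Qed.
Lemma sr_sum A (T : Type) (r : seq T) (F : T -> K) :
  subring A -> (forall t, A (F t)) -> A (\sum_(t <- r) F t).
Proof.
move=> h hF; apply: (big_ind A); [exact: sr0 | move=> *; exact: srD | by []].
Qed.
Lemma sr_sumP A (T : Type) (r : seq T) (P : pred T) (F : T -> K) :
  subring A -> (forall t, P t -> A (F t)) -> A (\sum_(t <- r | P t) F t).
Proof.
move=> h hF; apply: (big_ind A); [exact: sr0 | move=> *; exact: srD | by []].
Qed.

Lemma id_sub A I a : ideal A I -> I a -> A a. Proof. by case=> h _ _ _; apply: h. Qed.
Lemma id0 A I : ideal A I -> I 0. Proof. by case. Qed.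
Lemma idD A I a b : ideal A I -> I a -> I b -> I (a + b). Proof. by case=> _ _ h _; apply: h. Qed.
Lemma idMl A I a b : ideal A I -> A a -> I b -> I (a * b). Proof. by case=> _ _ _ h; apply: h. Qed.
Lemma idMr A I a b : ideal A I -> I a -> A b -> I (a * b).
Proof. by move=> h ha hb; rewrite mulrC; apply: (idMl h). Qed.
Lemma idN A I a : subring A -> ideal A I -> I a -> I (- a).
Proof. by move=> hA h ha; rewrite -mulN1r; apply: (idMl h) => //; apply: srN => //; apply: sr1. Qed.
Lemma idB A I a b : subring A -> ideal A I -> I a -> I b -> I (a - b).
Proof. by move=> hA h ha hb; apply: (idD h) => //; apply: (idN hA). Qed.
Lemma id_sumP A I (T : Type) (r : seq T) (P : pred T) (F : T -> K) :
  ideal A I -> (forall t, P t -> I (F t)) -> I (\sum_(t <- r | P t) F t).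
Proof.
move=> h hF; apply: (big_ind I); [exact: id0 h | move=> *; exact: (idD h) | by []].
Qed.

Lemma unit_not_max A a : unit_in A a -> ~ maxideal A a.
Proof. by move=> h [_ []]. Qed.
Lemma not_max_unit A a : A a -> ~ maxideal A a -> unit_in A a.
Proof. by move=> ha h; apply: NNPP => hn; apply: h. Qed.
Lemma max_not1 A : subring A -> ~ maxideal A 1.
Proof. move=> h [_ []]; split; [exact: sr1 | exists 1; split; [exact: sr1|exact: mulr1]]. Qed.
Lemma ideal_unit_not A I a b : ideal A I -> ~ I 1 -> I a -> A b -> a * b = 1 -> False.
Proof. by move=> h h1 ha hb e; apply: h1; rewrite -e; apply: (idMr h). Qed.

Lemma propeq (P Q : K -> Prop) : (forall z, P z <-> Q z) -> P = Q.
Proof. by move=> h; apply: functional_extensionality => z; apply: propositional_extensionality. Qed.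

Lemma ex_minP (P : nat -> Prop) : (exists n, P n) -> exists n, P n /\ forall k, P k -> (n <= k)%N.
Proof.
move=> [n hn]; elim: n {-2}n (leqnn n) hn => [|m ih] n hn Pn.
  by exists n; split => // k _; move: hn; rewrite leqn0 => /eqP ->.
case: (classic (exists k, (k < n)%N /\ P k)) => [[k [hk Pk]]|hno].
  by apply: (ih k) => //; rewrite -ltnS; apply: leq_trans hk hn.
exists n; split => // k Pk; rewrite leqNgt; apply/negP => hk; apply: hno; by exists k.
Qed.

End Basic.

Section Deg.
Variable K : fieldType.
Implicit Types (A I : K -> Prop).

Definition pc (C : K -> Prop) (p : {poly K}) := forall k, C p`_k.

Lemma natr_in A (b : bool) : subring A -> A (b%:R).
Proof. by move=> h; case: b => /=; [exact: sr1 | exact: sr0]. Qed.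

Lemma pc_scale A I c r : ideal A I -> I c -> pc A r -> pc I (c *: r).
Proof. by move=> h hc hr k; rewrite coefZ; apply: (idMr h). Qed.

Lemma deg_step A I (hA : subring A) (hI : ideal A I) (hI1 : ~ I 1)
  (hunit : forall a, A a -> ~ I a -> exists b, A b /\ a * b = 1) (z : K) p q :
  z != 0 -> pc I p -> p.[z] = 1 -> pc I q -> q.[z^-1] = 1 -> (size q <= size p)%N ->
  exists p', [/\ pc I p', p'.[z] = 1 & (size p' < size p)%N].
Proof.
move=> z0 pI pz qI qz sqp.
set m := size p; set n := size q.
have n0 : (0 < n)%N.
  rewrite lt0n size_poly_eq0; apply/eqP => e; move: qz; rewrite e horner0 => /eqP.
  by rewrite eq_sym oner_eq0.
have hm : (0 < m)%N by apply: leq_trans sqp.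
set c := p`_(m.-1).
have IA : forall a, I a -> A a by move=> a; apply: id_sub hI.
have q0A : A (1 - q`_0) by apply: srB => //; [exact: sr1 | exact: IA].
have q0I : ~ I (1 - q`_0).
  by move=> h; apply: hI1; rewrite -(subrK q`_0 1); apply: (idD hI).
have [w [wA ew]] := hunit _ q0A q0I.
have sumq : \sum_(1 <= j < n) q`_j * z^-1 ^+ j = 1 - q`_0.
  move: qz; rewrite horner_coef -/n -(big_mkord xpredT (fun j => q`_j * z^-1 ^+ j)).
  by rewrite big_ltn // expr0 mulr1 => <-; rewrite [q`_0 + _]addrC addrK.
set T := \sum_(1 <= j < n) (w * q`_j) *: 'X^(m.-1 - j).
have Tz : T.[z] = z ^+ m.-1.
  rewrite /T horner_sum.
  have -> : \sum_(1 <= j < n) ((w * q`_j) *: 'X^(m.-1 - j)).[z] =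
            \sum_(1 <= j < n) z ^+ m.-1 * (w * (q`_j * z^-1 ^+ j)).
    apply: eq_big_nat => j /andP [j1 jn].
    have jm : (j <= m.-1)%N by rewrite -ltnS prednK //; apply: leq_trans jn sqp.
    rewrite hornerZ hornerXn exprB //; last by rewrite unitfE.
    rewrite exprVn; ring.
  by rewrite -mulr_sumr -mulr_sumr sumq [w * _]mulrC ew mulr1.
have TA : pc A T.
  move=> k; rewrite /T coef_sum; apply: sr_sumP => // j _.
  rewrite coefZ coefXn; apply: srM => //; last exact: natr_in.
  by apply: srM => //; exact: IA.
have T0 : forall j, (m.-1 <= j)%N -> T`_j = 0.
  move=> j hj; rewrite /T coef_sum; apply: big1_seq => l; rewrite mem_index_iota.
  move=> /andP [_ /andP [l1 ln]]; rewrite coefZ coefXn.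
  case: eqP => [e|_]; last by rewrite mulr0.
  exfalso; have lm : (l < m)%N by apply: leq_trans ln sqp.
  move: hj; rewrite e; move: lm l1; clear; lia.
exists (p - c *: 'X^(m.-1) + c *: T); split.
- move=> k; rewrite coefD coefB; apply: (idD hI); last first.
    exact: (pc_scale hI (pI _) TA k).
  apply: (idB hA hI) => //; apply: (pc_scale hI (pI _)).
  by move=> l; rewrite coefXn; exact: natr_in.
- by rewrite hornerD hornerD hornerN !hornerZ hornerXn Tz pz subrK.
- rewrite -[m]prednK // ltnS; apply/leq_sizeP => j hj.
  rewrite coefD coefB !coefZ coefXn T0 // mulr0 addr0.
  move: hj; rewrite leq_eqVlt => /orP [/eqP <-|hj]; first by rewrite eqxx mulr1 subrr.
  rewrite (gtn_eqF hj) mulr0 subr0; apply/eqP; move: hj; rewrite prednK //.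
  by move=> hj; apply/eqP; apply: nth_default.
Qed.

End Deg.

Section Chev.
Variable K : fieldType.
Implicit Types (A I : K -> Prop).
Variable S : K -> Prop.
Hypothesis hS : subring S.
Hypothesis hN : ideal S (maxideal S).

Definition good (pr : (K -> Prop) * (K -> Prop)) :=
  [/\ subring pr.1, sub_set S pr.1, ideal pr.1 pr.2, ~ pr.2 1 & sub_set (maxideal S) pr.2].

Definition GT := {pr | good pr}.
Definition gle (s t : GT) : bool :=
  boolp.asbool (sub_set (sval s).1 (sval t).1 /\ sub_set (sval s).2 (sval t).2).

Lemma gleP s t : reflect (sub_set (sval s).1 (sval t).1 /\ sub_set (sval s).2 (sval t).2) (gle s t).
Proof. exact: boolp.asboolP. Qed.

Lemma good_base : good (S, maxideal S).
Proof. split => //; apply: max_not1 hS. Qed.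

Lemma chain_pick (F1 F2 : GT -> K -> Prop) (B1 B2 : K -> Prop) (C : GT -> Prop) a b :
  classical_sets.total_on C gle ->
  (forall s t, gle s t -> sub_set (F1 s) (F1 t)) ->
  (forall s t, gle s t -> sub_set (F2 s) (F2 t)) ->
  (forall t, sub_set B1 (F1 t)) -> (forall t, sub_set B2 (F2 t)) ->
  (B1 a \/ exists t, C t /\ F1 t a) -> (B2 b \/ exists t, C t /\ F2 t b) ->
  (B1 a /\ B2 b) \/ exists t, [/\ C t, F1 t a & F2 t b].
Proof.
move=> tot m1 m2 b1 b2 [ha|[s [Cs hs]]] [hb|[t [Ct ht]]].
- by left.
- by right; exists t; split => //; apply: b1.
- by right; exists s; split => //; apply: b2.
- case: (tot s t Cs Ct) => h.
    by right; exists t; split => //; apply: (m1 s).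
  by right; exists s; split => //; apply: (m2 t).
Qed.

Lemma chev_zorn : exists t : GT, forall s : GT, gle t s -> gle s t.
Proof.
apply: (@classical_sets.ZL_preorder GT (exist _ _ good_base) gle).
- by move=> t; apply/gleP; split => z h.
- move=> r s t /gleP [h1 h2] /gleP [h3 h4]; apply/gleP.
  by split => z hz; [apply: h3; apply: h1 | apply: h4; apply: h2].
move=> C tot.
pose UA z := S z \/ exists t, C t /\ (sval t).1 z.
pose UI z := maxideal S z \/ exists t, C t /\ (sval t).2 z.
have m1 : forall s t, gle s t -> sub_set (sval s).1 (sval t).1.
  by move=> s t /gleP [].
have m2 : forall s t, gle s t -> sub_set (sval s).2 (sval t).2.
  by move=> s t /gleP [].
have b1 : forall t : GT, sub_set S (sval t).1 by move=> [pr [? ? ? ? ?]].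
have b2 : forall t : GT, sub_set (maxideal S) (sval t).2 by move=> [pr [? ? ? ? ?]].
have gt : forall t : GT, good (sval t) by move=> [].
have gU : good (UA, UI).
  split => /=.
  - split; first by left; apply: sr1.
    + move=> a b ha hb; case: (chain_pick tot m1 m1 b1 b1 ha hb) => [[h1 h2]|[t [Ct h1 h2]]].
        by left; apply: srB.
      by right; exists t; split => //; case: (gt t) => h _ _ _ _; apply: srB.
    + move=> a b ha hb; case: (chain_pick tot m1 m1 b1 b1 ha hb) => [[h1 h2]|[t [Ct h1 h2]]].
        by left; apply: srM.
      by right; exists t; split => //; case: (gt t) => h _ _ _ _; apply: srM.
  - by move=> z; left.
  - split.
    + move=> z [h|[t [Ct h]]]; first by left; case: hN => hh _ _ _; apply: hh.
      by right; exists t; split => //; case: (gt t) => _ _ h' _ _; apply: (id_sub h').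
    + by left; apply: id0 hN.
    + move=> a b ha hb; case: (chain_pick tot m2 m2 b2 b2 ha hb) => [[h1 h2]|[t [Ct h1 h2]]].
        by left; apply: (idD hN).
      by right; exists t; split => //; case: (gt t) => _ _ h _ _; apply: (idD h).
    + move=> a b ha hb; case: (chain_pick tot m1 m2 b1 b2 ha hb) => [[h1 h2]|[t [Ct h1 h2]]].
        by left; apply: (idMl hN).
      by right; exists t; split => //; case: (gt t) => _ _ h _ _; apply: (idMl h).
  - move=> [h|[t [Ct h]]]; first by apply: (max_not1 hS).
    by case: (gt t) => _ _ _ h' _; apply: h'.
  - by move=> z hz; left.
exists (exist _ _ gU) => s Cs; apply/gleP; split => z hz /=.
  by right; exists s.
by right; exists s.
Qed.

Lemma chevalley : exists V, [/\ valuation_ring V, sub_set S V, ideal V (maxideal V)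
   & forall z, S z -> (maxideal V z <-> maxideal S z)].
Proof.
have [[[A I] gAI] tmax] := chev_zorn.
case: (gAI) => /= hA SA hI hI1 NI.
have maxk : forall B J, good (B, J) -> sub_set A B -> sub_set I J ->
    sub_set B A /\ sub_set J I.
  move=> B J g h1 h2; have := tmax (exist _ _ g).
  have hh : gle (exist [eta good] (A, I) gAI) (exist _ _ g) by apply/gleP; split.
  by move=> /(_ hh) /gleP.
have IA : forall a, I a -> A a by move=> a; apply: id_sub hI.
have step1 : forall a, A a -> ~ I a -> exists i b, [/\ I i, A b & 1 = i + a * b].
  move=> a ha hna; apply: NNPP => hno.
  pose J z := exists i b, [/\ I i, A b & z = i + a * b].
  have gJ : good (A, J).
    split => //=.
    - split.
      + by move=> z [i [b [hi hb ->]]]; apply: srD => //; [exact: IA | exact: srM].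
      + exists 0, 0; split; [exact: id0 hI | exact: sr0 | by rewrite mulr0 addr0].
      + move=> u v [i [b [hi hb ->]]] [i' [b' [hi' hb' ->]]].
        exists (i + i'), (b + b'); split; [exact: (idD hI) | exact: srD | ].
        by rewrite mulrDr addrACA.
      + move=> c u hc [i [b [hi hb ->]]]; exists (c * i), (c * b).
        split; [exact: (idMl hI) | exact: srM | by rewrite mulrDr mulrCA].
    - move=> z hz; exists z, 0; split; [exact: NI | exact: sr0 | by rewrite mulr0 addr0].
  have [_ hJI] := maxk _ _ gJ (fun z h => h) (fun z h => ex_intro _ z (ex_intro _ 0
      (And3 h (sr0 hA) (esym (etrans (congr1 _ (mulr0 a)) (addr0 z)))))).
  apply: hna; apply: hJI; exists 0, 1; split; [exact: id0 hI | exact: sr1 | by rewrite add0r mulr1].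
have prm : forall d d', A d -> A d' -> ~ I d -> ~ I d' -> ~ I (d * d').
  move=> d d' hd hd' nd nd' hdd.
  have [i [b [hi hb e]]] := step1 _ hd nd.
  have [i' [b' [hi' hb' e']]] := step1 _ hd' nd'.
  apply: hI1.
  have -> : 1 = i * i' + i * (d' * b') + d * b * i' + (d * d') * (b * b').
    by rewrite -[1](mulr1 1) {1}e {1}e'; ring.
  apply: (idD hI); last by apply: (idMr hI) => //; apply: srM.
  apply: (idD hI); last by apply: (idMl hI) => //; apply: srM.
  apply: (idD hI); first by apply: (idMr hI) => //; apply: IA.
  by apply: (idMr hI) => //; apply: srM.
have nz : forall d, ~ I d -> d != 0.
  by move=> d h; apply/eqP => e; apply: h; rewrite e; apply: id0 hI.
have loc : forall a, A a -> ~ I a -> A a^-1.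
  move=> a ha hna.
  pose B z := exists c d, [/\ A c, A d, ~ I d & z = c / d].
  pose J z := exists c d, [/\ I c, A d, ~ I d & z = c / d].
  have gB : good (B, J).
    split => /=.
    - split.
      + by exists 1, 1; split => //; [exact: sr1 | exact: sr1 | rewrite divr1].
      + move=> u v [c [d [hc hd nd ->]]] [c' [d' [hc' hd' nd' ->]]].
        exists (c * d' - c' * d), (d * d'); split.
        * by apply: srB => //; apply: srM.
        * exact: srM.
        * exact: prm.
        * by field; rewrite (nz _ nd) (nz _ nd').
      + move=> u v [c [d [hc hd nd ->]]] [c' [d' [hc' hd' nd' ->]]].
        exists (c * c'), (d * d'); split.
        * exact: srM.
        * exact: srM.
        * exact: prm.
        * by field; rewrite (nz _ nd) (nz _ nd').
    - move=> z hz; exists z, 1; split; [exact: SA | exact: sr1 | done | by rewrite divr1].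
    - split.
      + by move=> z [c [d [hc hd nd ->]]]; exists c, d; split => //; apply: IA.
      + by exists 0, 1; split; [exact: id0 hI | exact: sr1 | done | rewrite mul0r].
      + move=> u v [c [d [hc hd nd ->]]] [c' [d' [hc' hd' nd' ->]]].
        exists (c * d' + c' * d), (d * d'); split.
        * by apply: (idD hI); [apply: (idMr hI) | apply: (idMr hI)].
        * exact: srM.
        * exact: prm.
        * by field; rewrite (nz _ nd) (nz _ nd').
      + move=> u v [c [d [hc hd nd ->]]] [c' [d' [hc' hd' nd' ->]]].
        exists (c * c'), (d * d'); split.
        * exact: (idMl hI).
        * exact: srM.
        * exact: prm.
        * by field; rewrite (nz _ nd) (nz _ nd').
    - move=> [c [d [hc hd nd e]]]; apply: nd.
      by rewrite -(divr1_eq (esym e)).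
    - move=> z hz; exists z, 1; split; [exact: NI | exact: sr1 | done | by rewrite divr1].
  have [hBA _] := maxk _ _ gB
    (fun z h => ex_intro _ z (ex_intro _ 1 (And4 h (sr1 hA) hI1 (esym (divr1 z)))))
    (fun z h => ex_intro _ z (ex_intro _ 1 (And4 h (sr1 hA) hI1 (esym (divr1 z))))).
  by apply: hBA; exists 1, a; split => //; [exact: sr1 | rewrite div1r].
have maxI : forall a, maxideal A a <-> I a.
  move=> a; split.
    move=> [ha hu]; apply: NNPP => hna; apply: hu; split => //.
    exists a^-1; split; first exact: loc.
    by rewrite divff // nz.
  move=> h; split; first exact: IA.
  by move=> [_ [b [hb e]]]; apply: (ideal_unit_not hI hI1 h hb e).
have hunit : forall a, A a -> ~ I a -> exists b, A b /\ a * b = 1.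
  by move=> a ha hna; exists a^-1; split; [exact: loc | rewrite divff // nz].
have adj : forall z0, ~ A z0 -> exists p, pc I p /\ p.[z0] = 1.
  move=> z0 hz0; apply: NNPP => hno.
  pose Az z := exists p, pc A p /\ z = p.[z0].
  pose Iz z := exists p, pc I p /\ z = p.[z0].
  have cst : forall (C : K -> Prop) (c : K), C c -> C 0 -> pc C c%:P.
    by move=> C c hc h0 k; rewrite coefC; case: (k == 0%N).
  have gz : good (Az, Iz).
    split => /=.
    - split.
      + exists 1; split; last by rewrite hornerC.
        by move=> k; rewrite coef1; exact: natr_in.
      + move=> u v [p [hp ->]] [q [hq ->]]; exists (p - q); split; last by rewrite hornerD hornerN.
        by move=> k; rewrite coefB; apply: srB.
      + move=> u v [p [hp ->]] [q [hq ->]]; exists (p * q); split; last by rewrite hornerM.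
        by move=> k; rewrite coefM; apply: sr_sumP => // j _; apply: srM.
    - move=> z hz; exists z%:P; split; last by rewrite hornerC.
      by apply: cst; [exact: SA | exact: sr0].
    - split.
      + by move=> z [p [hp ->]]; exists p; split => // k; apply: IA.
      + by exists 0; split; [move=> k; rewrite coef0; exact: id0 hI | rewrite horner0].
      + move=> u v [p [hp ->]] [q [hq ->]]; exists (p + q); split; last by rewrite hornerD.
        by move=> k; rewrite coefD; apply: (idD hI).
      + move=> u v [p [hp ->]] [q [hq ->]]; exists (p * q); split; last by rewrite hornerM.
        by move=> k; rewrite coefM; apply: (id_sumP _ hI) => j _; apply: (idMl hI).
    - by move=> [p [hp e]]; apply: hno; exists p.
    - move=> z hz; exists z%:P; split; last by rewrite hornerC.
      by apply: cst; [exact: NI | exact: id0 hI].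
  have [hzA _] := maxk _ _ gz
    (fun z h => ex_intro _ z%:P (conj (cst _ _ h (sr0 hA)) (esym (hornerC z z0))))
    (fun z h => ex_intro _ z%:P (conj (cst _ _ h (id0 hI)) (esym (hornerC z z0)))).
  apply: hz0; apply: hzA; exists 'X; split; last by rewrite hornerX.
  by move=> k; rewrite coefX; exact: natr_in.
have val : forall z, z != 0 -> A z \/ A z^-1.
  move=> z z0; apply: NNPP => hno.
  have nz1 : ~ A z by move=> h; apply: hno; left.
  have nz2 : ~ A z^-1 by move=> h; apply: hno; right.
  have [p0 [p0I p0z]] := adj _ nz1.
  have [q0 [q0I q0z]] := adj _ nz2.
  have [k1 [[p [pI pz sp]] min1]] := @ex_minP (fun k => exists p, [/\ pc I p, p.[z] = 1 & size p = k])
      (ex_intro _ (size p0) (ex_intro _ p0 (And3 p0I p0z erefl))).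
  have [k2 [[q [qI qz sq]] min2]] := @ex_minP (fun k => exists p, [/\ pc I p, p.[z^-1] = 1 & size p = k])
      (ex_intro _ (size q0) (ex_intro _ q0 (And3 q0I q0z erefl))).
  case: (leqP (size q) (size p)) => hs.
    have [p' [p'I p'z sp']] := deg_step hA hI hI1 hunit z0 pI pz qI qz hs.
    have := min1 (size p') (ex_intro _ p' (And3 p'I p'z erefl)).
    by rewrite -sp leqNgt sp'.
  have z1 : z^-1 != 0 by rewrite invr_eq0.
  have pz' : p.[z^-1^-1] = 1 by rewrite invrK.
  have [q' [q'I q'z sq']] := deg_step hA hI hI1 hunit z1 qI qz pI pz' (ltnW hs).
  have := min2 (size q') (ex_intro _ q' (And3 q'I q'z erefl)).
  by rewrite -sq leqNgt sq'.
exists A; split => //.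
- by split => // z hz; apply: val; apply/eqP.
- have -> : maxideal A = I by apply: propeq.
  exact: hI.
- move=> z hz; rewrite maxI; split; last by apply: NI.
  move=> hIz; apply: NNPP => hnm.
  have [_ [b [hb e]]] := not_max_unit hz hnm.
  exact: (ideal_unit_not hI hI1 hIz (SA _ hb) e).
Qed.

End Chev.

Section Span.
Variable K : fieldType.
Implicit Types (A B I G : K -> Prop).

Lemma span_sub A B I G : ideal B I -> (forall a g, A a -> G g -> I (a * g)) ->
  sub_set (ideal_span A G) I.
Proof.
move=> hI h z [s [hs ->]]; rewrite big_seq; apply: (id_sumP _ hI) => t ts.
by have [h1 h2] := hs t ts; apply: h.
Qed.

Lemma span_single A G (a g : K) : A a -> G g -> ideal_span A G (a * g).
Proof.
by move=> ha hg; exists [:: (a, g)]; split; [move=> t; rewrite inE => /eqP -> | rewrite big_cons big_nil addr0].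
Qed.

Lemma principal_ideal (V : K -> Prop) (x : K) : subring V -> V x -> ideal V (principal V x).
Proof.
move=> hV hx; split.
- by move=> z [s [hs ->]]; apply: srM.
- by exists 0; split; [exact: sr0 | rewrite mulr0].
- by move=> a b [s [hs ->]] [t [ht ->]]; exists (s + t); split; [exact: srD | rewrite mulrDr].
- by move=> a b ha [s [hs ->]]; exists (a * s); split; [exact: srM | rewrite mulrCA].
Qed.

Lemma ideal_pow0 A I k : ideal_pow A I k 0.
Proof. by exists [::]; split => //; rewrite big_nil. Qed.

Lemma m2_prod A I (a b : K) : subring A -> I a -> I b -> ideal_pow A I 2 (a * b).
Proof.
move=> hA ha hb; rewrite -[a * b]mul1r; apply: span_single; first exact: sr1.
exists [:: a; b]; split => //; last by rewrite !big_cons big_nil mulr1.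
by move=> c; rewrite !inE => /orP [/eqP ->|/eqP ->].
Qed.

End Span.

Section Seq.
Variable K : fieldType.
Variable R : nat -> K -> Prop.
Hypothesis hq : quadratic_sequence R.

Lemma Rsub i : subring (R i).
Proof. by have [[d [_ [[h _] _ _ _]]] _ _] := hq i. Qed.
Lemma Rmax i : ideal (R i) (maxideal (R i)).
Proof. by have [[d [_ [[_ h] _ _ _]]] _ _] := hq i. Qed.
Lemma Rinc i : sub_set (R i) (R i.+1).
Proof. by have [_ _ [h _]] := hq i. Qed.
Lemma Rmono i j : (i <= j)%N -> sub_set (R i) (R j).
Proof.
move=> hij; elim: j hij => [|j ih]; first by rewrite leqn0 => /eqP ->.
rewrite leq_eqVlt => /orP [/eqP ->|h] // z hz; apply: Rinc; exact: ih.
Qed.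

Lemma qt i : exists y, [/\ maxideal (R i) y, y != 0,
   (forall a, maxideal (R i) a -> maxideal (R i.+1) a) &
   forall a, maxideal (R i) a -> R i.+1 (a / y)].
Proof.
have [_ [y [hy hy2 [q [qp qm eR]]]] _] := hq i.
have [qI q1 _] := qp.
have blow : forall z, R i z -> blowup (R i) y z by move=> z hz C _ hC _; apply: hC.
have y0 : y != 0 by apply/eqP => e; apply: hy2; rewrite e; apply: ideal_pow0.
exists y; split => //.
- move=> a [ha hna]; split; first exact: Rinc.
  move=> [_ [b [hb e]]]; move: hb; rewrite eR => -[c [d [hc hd nd eb]]].
  have d0 : d != 0 by apply/eqP => d0; move: e; rewrite eb d0 invr0 !mulr0 => /eqP; rewrite eq_sym oner_eq0.
  apply: nd; have -> : d = a * c by move: e; rewrite eb mulrA => /(congr1 (fun w => w * d)); rewrite mul1r divfK.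
  by rewrite mulrC; apply: (idMl qI) => //; apply: qm; split.
- move=> a ha; rewrite eR; exists (a / y), 1; split => //.
  + by move=> C _ _ hG; apply: hG; exists a.
  + by move=> C hC _ _; apply: sr1.
  + by rewrite divr1.
Qed.

Lemma maxinc i a : maxideal (R i) a -> maxideal (R i.+1) a.
Proof. by have [y [_ _ h _]] := qt i; apply: h. Qed.
Lemma maxmono i j a : (i <= j)%N -> maxideal (R i) a -> maxideal (R j) a.
Proof.
move=> hij; elim: j hij => [|j ih]; first by rewrite leqn0 => /eqP ->.
rewrite leq_eqVlt => /orP [/eqP ->|h] // hz; apply: maxinc; exact: ih.
Qed.

Local Notation S := (union_ring R).
Local Notation N := (union_max R).

Lemma S_sub : subring S.
Proof.
split; first by exists 0%N; apply: sr1 (Rsub 0).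
- move=> a b [i ha] [j hb]; exists (maxn i j); apply: srB; first exact: Rsub.
  + by apply: (Rmono (leq_maxl i j)).
  + by apply: (Rmono (leq_maxr i j)).
- move=> a b [i ha] [j hb]; exists (maxn i j); apply: srM; first exact: Rsub.
  + by apply: (Rmono (leq_maxl i j)).
  + by apply: (Rmono (leq_maxr i j)).
Qed.

Lemma N_iff z : N z <-> maxideal S z.
Proof.
split.
- move=> [i [hz hnu]]; split; first by exists i.
  move=> [_ [b [[j hb] e]]]; apply: (hnu); split => //.
  have : maxideal (R (maxn i j)) z by apply: (maxmono (leq_maxl i j)); split.
  move=> [_ hh]; exfalso; apply: hh; split; first by apply: (Rmono (leq_maxl i j)).
  by exists b; split => //; apply: (Rmono (leq_maxr i j)).
- move=> [[i hz] hnu]; exists i; split => //.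
  move=> [_ [b [hb e]]]; apply: hnu; split; first by exists i.
  by exists b; split => //; exists i.
Qed.

Lemma N_ideal : ideal S N.
Proof.
split.
- by move=> z [i [hz _]]; exists i.
- by exists 0%N; apply: id0 (Rmax 0).
- move=> a b [i ha] [j hb]; exists (maxn i j); apply: (idD (Rmax _)).
  + by apply: (maxmono (leq_maxl i j)).
  + by apply: (maxmono (leq_maxr i j)).
- move=> a b [j ha] [i hb]; exists (maxn i j); apply: (idMl (Rmax _)).
  + by apply: (Rmono (leq_maxr i j)).
  + by apply: (maxmono (leq_maxl i j)).
Qed.

Lemma S_max_ideal : ideal S (maxideal S).
Proof. have -> : maxideal S = N by apply: propeq => z; rewrite N_iff. exact: N_ideal. Qed.

Lemma N_sub z : N z -> S z.
Proof. by move=> [i [h _]]; exists i. Qed.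

Lemma not_N1 : ~ N 1.
Proof. by rewrite N_iff; apply: max_not1 S_sub. Qed.

End Seq.

Section Dirs.
Variable K : fieldType.
Variable R : nat -> K -> Prop.
Hypothesis hq : quadratic_sequence R.
Variable x : K.
Hypothesis hx : union_ring R x.

Local Notation S := (union_ring R).
Local Notation N := (union_max R).

Lemma imp41 : (exists i0 : nat, forall i : nat, (i0 <= i)%N ->
          maxideal (R i) x /\ ~ ideal_pow (R i) (maxideal (R i)) 2 x) ->
  N = principal S x.
Proof.
move=> [i0 h]; apply: propeq => z; split.
- move=> [j hj]; set i := maxn j i0.
  have hzi : maxideal (R i) z by apply: (maxmono hq (leq_maxl j i0)).
  have [hxi _] := h i (leq_maxr j i0).
  have [y [hy y0 hinc hdiv]] := qt hq i.
  set u := x / y.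
  have hu : R i.+1 u by apply: hdiv.
  have xe : x = u * y by rewrite /u divfK.
  case: (classic (maxideal (R i.+1) u)) => hum.
    exfalso; have [_ h2] := h i.+1 (leq_trans (leq_maxr j i0) (leqnSn i)).
    apply: h2; rewrite xe mulrC; apply: m2_prod; [exact: Rsub | exact: hinc | exact: hum].
  have [_ [b [hb ub]]] := not_max_unit hu hum.
  exists (b * (z / y)); split.
    by exists i.+1; apply: srM; [exact: Rsub hq i.+1 | exact: hb | exact: hdiv].
  rewrite xe.
  have -> : u * y * (b * (z / y)) = (u * b) * (z / y * y) by ring.
  by rewrite ub mul1r divfK.
- move=> [s [hs ->]]; apply: (idMr (N_ideal hq)) => //.
  by exists i0; have [] := h i0 (leqnn i0).
Qed.

Lemma imp13 : N = principal S x ->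
  (forall V, bir_dominates V S N ->
          exists i0 : nat, forall i : nat, (i0 <= i)%N ->
            ideal_span V (maxideal (R i)) = principal V x).
Proof.
move=> e V [[hV _] SV _].
have : N x by rewrite e; exists 1; split; [exact: sr1 (S_sub hq) | rewrite mulr1].
move=> [j hj]; exists j => i hi.
have hxi := maxmono hq hi hj.
apply: propeq => z; split.
- apply: (span_sub (principal_ideal hV (SV _ hx))) => a g ha hg.
  have : N g by exists i.
  rewrite e => -[s [hs ->]]; exists (a * s); split; first by apply: srM => //; apply: SV.
  by rewrite mulrCA.
- move=> [v [hv ->]]; rewrite mulrC; exact: span_single.
Qed.

Lemma imp34 : (forall V, bir_dominates V S N ->
          exists i0 : nat, forall i : nat, (i0 <= i)%N ->
            ideal_span V (maxideal (R i)) = principal V x) ->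
  exists i0 : nat, forall i : nat, (i0 <= i)%N ->
          maxideal (R i) x /\ ~ ideal_pow (R i) (maxideal (R i)) 2 x.
Proof.
move=> h3.
have [V [hval SV hVm dom]] := chevalley (S_sub hq) (S_max_ideal hq).
have [hV _] := hval.
have bd : bir_dominates V S N.
  by split => // z hz; rewrite dom // (N_iff hq).
have [i0 hi0] := h3 V bd.
have mV : forall i, sub_set (maxideal (R i)) (maxideal V).
  move=> i z hz; have hS : S z by exists i; case: hz.
  by rewrite dom // -(N_iff hq); exists i.
have xV : forall i, (i0 <= i)%N -> maxideal V x.
  move=> i hi; apply: (span_sub hVm (A := V) (G := maxideal (R i))).
    by move=> a g ha hg; apply: (idMl hVm) => //; apply: (mV i).
  by rewrite (hi0 i hi); exists 1; split; [exact: sr1 | rewrite mulr1].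
have : N x by rewrite (N_iff hq) -dom //; apply: (xV i0).
move=> [j hj]; exists (maxn i0 j) => i hi.
have hi0' : (i0 <= i)%N by apply: leq_trans (leq_maxl i0 j) hi.
split; first by apply: (maxmono hq (leq_trans (leq_maxr i0 j) hi)).
move=> hx2.
have spx : forall a, maxideal (R i) a -> principal V x a.
  move=> a ha; rewrite -(hi0 i hi0'); rewrite -[a]mul1r; apply: span_single => //.
  exact: sr1.
have x0 : x != 0.
  apply/eqP => x0; have [y [hy y0 _ _]] := qt hq i.
  have [s [_ ys]] := spx y hy; by move: y0; rewrite ys x0 mul0r eqxx.
have : principal V (x * x) x.
  apply: (span_sub (principal_ideal hV (srM hV (SV _ hx) (SV _ hx))) _ hx2).
  move=> a g ha [s [ss hs ->]].
  case: s ss hs => [|b [|c []]] // _ hs.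
  have [v1 [hv1 ->]] := spx b (hs b (mem_head _ _)).
  have hc : c \in [:: b; c] by rewrite !inE eqxx orbT.
  have [v2 [hv2 ->]] := spx c (hs c hc).
  exists (a * (v1 * v2)); split.
    by apply: (srM hV); [apply: SV; exists i | apply: (srM hV)].
  by rewrite !big_cons big_nil; ring.
move=> [w [hw e]].
have xw : x * w = 1.
  by apply: (mulfI x0); rewrite mulr1 mulrA -e.
by have [_ hnu] := xV i hi0'; apply: hnu; split; [exact: SV | exists w].
Qed.

End Dirs.

Section Dirs2.
Variable K : fieldType.
Variable R : nat -> K -> Prop.
Hypothesis hq : quadratic_sequence R.
Variable x : K.
Hypothesis hx : union_ring R x.

Local Notation S := (union_ring R).
Local Notation N := (union_max R).

Lemma pow1N z : ideal_pow S N 1 z -> N z.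
Proof.
apply: (span_sub (N_ideal hq)) => a g ha [s [ss hs ->]].
case: s ss hs => [|b []] // _ hs; rewrite big_cons big_nil mulr1.
by apply: (idMl (N_ideal hq)) => //; apply: hs; rewrite inE.
Qed.

Lemma imp21 :
  let P := fun z => forall i : nat, (0 < i)%N -> ideal_pow S N i z in
  [/\ prime_ideal S P, quotient_DVR S P x & P = ideal_span (localize S P) P] ->
  N = principal S x.
Proof.
move=> P [[hPI _ _] [_ hSx nPx hiff _] eP].
have PN : forall z, P z -> N z by move=> z hz; apply: pow1N; apply: hz.
have x0 : x != 0 by apply/eqP => x0; apply: nPx; rewrite x0; apply: id0 hPI.
have hS := S_sub hq.
have hNI := N_ideal hq.
apply: propeq => z; split.
- move=> hz; have hzS := N_sub hz.
  have nu : ~ exists b, S b /\ P (z * b - 1).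
    move=> [b [hb hp]]; apply: (not_N1 hq).
    have -> : 1 = z * b - (z * b - 1) by rewrite opprB addrC subrK.
    apply: (idB hS hNI); [exact: (idMr hNI) | exact: PN].
  have [s [hs hps]] := (hiff z hzS).1 nu.
  have hpx : P (x^-1 * (z - x * s)).
    rewrite eP; apply: span_single => //.
    by exists 1, x; split => //; [exact: sr1 | rewrite div1r].
  exists (s + x^-1 * (z - x * s)); split.
    by apply: srD => //; apply: (id_sub hPI).
  by rewrite mulrDr mulrA divff // mul1r addrC subrK.
- move=> [s [hs ->]]; apply: (idMr hNI) => //.
  rewrite (N_iff hq); split => //; move=> [_ [b [hb e]]].
  have : exists s0, S s0 /\ P (x - x * s0).
    by exists 1; split; [exact: sr1 | rewrite mulr1 subrr; exact: id0 hPI].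
  move/(hiff x hSx); apply; exists b; split => //.
  by rewrite e subrr; exact: id0 hPI.
Qed.

Lemma prod_nseq (y : K) i : \prod_(a <- nseq i y) a = y ^+ i.
Proof. by elim: i => [|i ih]; rewrite ?big_nil ?expr0 // /= big_cons ih exprS. Qed.

Lemma imp12 : N = principal S x ->
  let P := fun z => forall i : nat, (0 < i)%N -> ideal_pow S N i z in
  [/\ prime_ideal S P, quotient_DVR S P x & P = ideal_span (localize S P) P].
Proof.
move=> e P.
have hS := S_sub hq.
have hNI := N_ideal hq.
have xN : N x by rewrite e; exists 1; split; [exact: sr1 | rewrite mulr1].
have xS : S x := N_sub xN.
have x0 : x != 0.
  apply/eqP => x0; have [y [hy y0 _ _]] := qt hq 0.
  have : N y by exists 0%N.
  by rewrite e => -[s [_ ys]]; move: y0; rewrite ys x0 mul0r eqxx.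
pose Pc z := forall i, exists s, S s /\ z = x ^+ i * s.
have prod_pow : forall s : seq K, (forall a, a \in s -> N a) ->
    principal S (x ^+ size s) (\prod_(a <- s) a).
  elim => [|a s ih] hs.
    by exists 1; split; [exact: sr1 | rewrite big_nil expr0 mulr1].
  have [d [hd ed]] := ih (fun b hb => hs b (mem_behead (s := a :: s) hb)).
  have : N a by apply: hs; rewrite inE eqxx.
  rewrite e => -[c [hc ->]].
  exists (c * d); split; first exact: srM.
  by rewrite big_cons ed /= exprS; ring.
have eP : P = Pc.
  apply: propeq => z; split.
  - move=> h i; case: i => [|i].
      exists z; split; last by rewrite expr0 mul1r.
      by apply: N_sub; apply: pow1N; apply: h.
    apply: (span_sub (principal_ideal hS (srX _ hS xS)) (A := S) _ (h i.+1 isT)).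
    move=> a g ha [s [ss hs ->]].
    have [d [hd ->]] := prod_pow s hs.
    by rewrite ss; exists (a * d); split; [exact: srM | rewrite mulrCA].
  - move=> h i hi; have [s [hs ->]] := h i; rewrite mulrC; apply: span_single => //.
    exists (nseq i x); split; first by rewrite size_nseq.
      by move=> a; rewrite mem_nseq => /andP [_ /eqP ->].
    by rewrite prod_nseq.
rewrite eP.
have PcI : ideal S Pc.
  split.
  - by move=> z h; have [s [hs ->]] := h 0%N; rewrite expr0 mul1r.
  - by move=> i; exists 0; split; [exact: sr0 | rewrite mulr0].
  - move=> a b ha hb i; have [s [hs ->]] := ha i; have [t [ht ->]] := hb i.
    by exists (s + t); split; [exact: srD | rewrite mulrDr].
  - move=> a b ha hb i; have [s [hs ->]] := hb i.
    by exists (a * s); split; [exact: srM | rewrite mulrCA].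
have PcN : forall z, Pc z -> N z.
  by move=> z h; have [s [hs ->]] := h 1%N; rewrite expr1 e; exists s.
have Pc1 : ~ Pc 1 by move=> h; apply: (not_N1 hq); apply: PcN.
have unitN : forall u v, S u -> S v -> u * v = 1 -> ~ N u.
  move=> u v hu hv uv; rewrite (N_iff hq) => -[_]; apply; split => //.
  by exists v.
have decomp : forall a, S a -> ~ Pc a ->
    exists m u v, [/\ S u, S v, u * v = 1 & a = x ^+ m * u].
  move=> a ha hna.
  have [k [hk kmin]] := @ex_minP (fun k => ~ exists s, S s /\ a = x ^+ k * s)
     (not_all_ex_not _ _ hna).
  case: k hk kmin => [|m] hk kmin.
    by exfalso; apply: hk; exists a; split => //; rewrite expr0 mul1r.
  have [u [hu eu]] : exists u, S u /\ a = x ^+ m * u.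
    apply: NNPP => h; have := kmin m h; by rewrite ltnn.
  have nu : ~ N u.
    rewrite e => -[c [hc ec]]; apply: hk; exists c; split => //.
    by rewrite eu ec exprS; ring.
  have [_ [v [hv uv]]] : unit_in S u.
    by apply: not_max_unit => //; rewrite -(N_iff hq).
  by exists m, u, v.
have xpow0 : forall m, x ^+ m != 0 by move=> m; rewrite expf_neq0.
have nPx : ~ Pc x.
  move=> h; have [s [hs es]] := h 2%N.
  have xs : x * s = 1.
    by apply: (mulfI x0); rewrite mulr1 mulrA -expr2 -es.
  by apply: (unitN x s) => //.
have prime : prime_ideal S Pc.
  split => // a b ha hb hab; apply: NNPP => hno.
  have [m [u [v [hu hv uv ea]]]] := decomp a ha (fun h => hno (or_introl h)).
  have [n [u' [v' [hu' hv' uv' eb]]]] := decomp b hb (fun h => hno (or_intror h)).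
  have [s [hs es]] := hab (m + n).+1%N.
  have e2 : u * u' = x * s.
    apply: (mulfI (xpow0 (m + n)%N)).
    have -> : x ^+ (m + n) * (x * s) = a * b by rewrite es exprSr; ring.
    by rewrite ea eb exprD; ring.
  apply: (unitN (u * u') (v * v')); [exact: srM | exact: srM | | ].
    by rewrite mulrACA uv uv' mulr1.
  by rewrite e2 e; exists s.
split => //.
- split => //.
  + move=> a ha; split.
    * move=> nu.
      have : N a.
        rewrite (N_iff hq); split => //; move=> [_ [b [hb ab]]]; apply: nu.
        by exists b; split => //; rewrite ab subrr; apply: id0 PcI.
      rewrite e => -[s [hs ->]]; exists s; split => //; rewrite subrr; exact: id0 PcI.
    * move=> [s [hs hp]] [b [hb hp']]; apply: (not_N1 hq).
      have -> : 1 = ((a - x * s) * b + x * (s * b)) - (a * b - 1) by ring.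
      apply: (idB hS hNI); last exact: PcN.
      apply: (idD hNI); first by apply: (idMr hNI) => //; apply: PcN.
      by rewrite e; exists (s * b); split => //; apply: srM.
  + move=> J hJ PJ.
    case: (classic (exists j, J j /\ ~ Pc j)) => [hex|hno].
      have [m [[j [u [v [hj hu hv uv ej]]]] mmin]] := @ex_minP
        (fun m => exists j u v, [/\ J j, S u, S v, u * v = 1 & j = x ^+ m * u])
        (let: ex_intro j (conj hj hnj) := hex in
         let: ex_intro m (ex_intro u (ex_intro v (And4 hu hv uv ej))) :=
           decomp j (id_sub hJ hj) hnj in
         ex_intro _ m (ex_intro _ j (ex_intro _ u (ex_intro _ v (And5 hj hu hv uv ej))))).
      exists (x ^+ m); split; first exact: srX.
      have xmJ : J (x ^+ m).
        have -> : x ^+ m = j * v by rewrite ej -mulrA uv mulr1.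
        exact: (idMr hJ).
      apply: propeq => z; split.
      * move=> hz; split; first exact: (id_sub hJ).
        case: (classic (Pc z)) => hpz.
          by exists 0; split; [exact: sr0 | rewrite mul0r subr0].
        have [k [w [w' [hw hw' ww' ez]]]] := decomp z (id_sub hJ hz) hpz.
        have mk : (m <= k)%N.
          apply: mmin; exists z, w, w'; split => //.
        exists (x ^+ (k - m) * w); split; first by apply: srM => //; exact: srX.
        have -> : x ^+ (k - m) * w * x ^+ m = x ^+ (k - m + m) * w by rewrite exprD; ring.
        by rewrite subnK // -ez subrr; exact: id0 PcI.
      * move=> [hz [a [ha hp]]].
        have -> : z = (z - a * x ^+ m) + a * x ^+ m by rewrite subrK.
        apply: (idD hJ); first exact: PJ.
        exact: (idMl hJ).
    exists 0; split; first exact: sr0.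
    apply: propeq => z; split.
    * move=> hz; split; first exact: (id_sub hJ).
      exists 0; split; first exact: sr0.
      rewrite mulr0 subr0; apply: NNPP => hnp; apply: hno; by exists z.
    * by move=> [hz [a [ha]]]; rewrite mulr0 subr0; apply: PJ.
- apply: propeq => z; split.
  + move=> hz; rewrite -[z]mul1r; apply: span_single => //.
    by exists 1, 1; split => //; [exact: sr1 | exact: sr1 | rewrite divr1].
  + apply: (span_sub PcI) => a g [c [d [hc hd nd ->]]] hg i.
    have [m [u [v [hu hv uv ed]]]] := decomp d hd nd.
    have [s [hs eg]] := hg (i + m)%N.
    exists (c * s * v); split; first by apply: srM => //; apply: srM.
    have u0 : u != 0 by apply/eqP => u0; move: uv; rewrite u0 mul0r => /eqP; rewrite eq_sym oner_eq0.
    have vE : v = u^-1 by rewrite -[v]mul1r -(mulVf u0) -mulrA uv mulr1.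
    rewrite ed eg vE exprD; field.
    by rewrite u0 xpow0.
Qed.

End Dirs2.

Theorem lemma3p4 (K : fieldType) (R : nat -> K -> Prop) (x : K) :
  has_fraction_field (R 0%N) ->
  quadratic_sequence R ->
  union_ring R x ->
  let S := union_ring R in
  let N := union_max R in
  let P := fun z => forall i : nat, (0 < i)%N -> ideal_pow S N i z in
  [<-> N = principal S x;
       [/\ prime_ideal S P, quotient_DVR S P x & P = ideal_span (localize S P) P];
       (forall V, bir_dominates V S N ->
          exists i0 : nat, forall i : nat, (i0 <= i)%N ->
            ideal_span V (maxideal (R i)) = principal V x);
       exists i0 : nat, forall i : nat, (i0 <= i)%N ->
          maxideal (R i) x /\ ~ ideal_pow (R i) (maxideal (R i)) 2 x].
Proof.
move=> _ hq hx S N P; tfae.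
- exact: (imp12 hq).
- move=> h; apply: (imp13 hq hx); exact: (imp21 hq h).
- exact: (imp34 hq hx).
- exact: (imp41 hq).
Qed.
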